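(* Let $\kappa>-1$ and $\lambda\in\mathbb{C}$. Let $T_\kappa$ be the operator $T_\kappa f(x)=f'(x)+\kappa\frac{f(x)-f(0)}{x}$ on functions of one real variable. Then the problem $$T_\kappa f(x)=i\lambda f(x),\qquad f(0)=1,$$ has a unique analytic solution, namely $f(x)=M_\kappa(i\lambda x):=M(1,\kappa+1;i\lambda x)$, where $M(a,b;z)=\sum_{n=0}^\infty\frac{(a)_n}{(b)_n}\frac{z^n}{n!}$ is the confluent hypergeometric (Kummer) function.
   Context: $(a)_n=\Gamma(a+n)/\Gamma(a)$ is the Pochhammer symbol. For an analytic $f$, the quotient $(f(x)-f(0))/x$ is understood as its analytic extension at $x=0$. *)

(* Defs.v *)
From Stdlib Require Import Reals Factorial.
From Coquelicot Require Import Coquelicot.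
Open Scope R_scope.

Definition real_analytic (f : R -> C) : Prop :=
  forall x0 : R, exists r : R, 0 < r /\ exists a : nat -> C,
    forall x : R, Rabs (x - x0) < r ->
      is_series (fun n => (a n * RtoC ((x - x0) ^ n))%C) (f x).

Definition Cderiv (f : R -> C) (x : R) : C :=
  (Derive (fun t => Re (f t)) x, Derive (fun t => Im (f t)) x).

(* (f(x) - f(0))/x, with its analytic extension f'(0) at x = 0 *)
Definition diff_quot (f : R -> C) (x : R) : C :=
  if Req_EM_T x 0 then Cderiv f 0 else ((f x - f 0) / RtoC x)%C.

Definition T_kappa (kappa : R) (f : R -> C) (x : R) : C :=
  (Cderiv f x + RtoC kappa * diff_quot f x)%C.

Fixpoint poch (a : C) (n : nat) : C :=
  match n with
  | O => 1%C
  | S m => (poch a m * (a + INR m))%C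
  end.

Definition kummer_term (a b z : C) (n : nat) : C :=
  (poch a n / poch b n * Cpow z n / INR (fact n))%C.

(* Main.v *)
Require Import Defs.
From Stdlib Require Import Reals Lra Lia Arith Factorial FunctionalExtensionality.
From Coquelicot Require Import Coquelicot.
Open Scope R_scope.
Lemma C_lim_iff (u : nat -> C) (l : C) :
  filterlim u eventually (locally l) <->
  filterlim (fun n => fst (u n)) eventually (locally (fst l)) /\
  filterlim (fun n => snd (u n)) eventually (locally (snd l)).
Proof.
  split.
  - intros H. split.
    + intros P [e He]. apply (H (fun y => P (fst y))). exists e. intros y [H1 H2]. now apply He.
    + intros P [e He]. apply (H (fun y => P (snd y))). exists e. intros y [H1 H2]. now apply He.
  - intros [H1 H2] P [e He].
    assert (E1 := H1 _ (locally_ball (fst l) e)).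
    assert (E2 := H2 _ (locally_ball (snd l) e)).
    unfold filtermap in E1, E2. unfold filtermap.
    generalize (filter_and _ _ E1 E2). apply filter_imp.
    intros n [A B]. apply He. split; assumption.
Qed.

Lemma sum_n_fst (a : nat -> C) n : fst (sum_n a n) = sum_n (fun k => fst (a k)) n.
Proof.
  induction n. - now rewrite !sum_O. - rewrite !sum_Sn. simpl. rewrite <- IHn. reflexivity.
Qed.
Lemma sum_n_snd (a : nat -> C) n : snd (sum_n a n) = sum_n (fun k => snd (a k)) n.
Proof.
  induction n. - now rewrite !sum_O. - rewrite !sum_Sn. simpl. rewrite <- IHn. reflexivity.
Qed.

Lemma C_series_iff (a : nat -> C) (l : C) :
  is_series a l <-> is_series (fun n => fst (a n)) (fst l) /\ is_series (fun n => snd (a n)) (snd l).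
Proof.
  unfold is_series. rewrite C_lim_iff.
  split; intros [H1 H2]; split.
  - eapply filterlim_ext; [|exact H1]. intros n. apply sum_n_fst.
  - eapply filterlim_ext; [|exact H2]. intros n. apply sum_n_snd.
  - eapply filterlim_ext; [|exact H1]. intros n. symmetry. apply sum_n_fst.
  - eapply filterlim_ext; [|exact H2]. intros n. symmetry. apply sum_n_snd.
Qed.
Lemma sum_f_ge (f : nat -> R) n i : (forall k, 0 <= f k) -> (i <= n)%nat -> f i <= sum_f_R0 f n.
Proof.
  intros Hf. induction n; intros Hi.
  - replace i with 0%nat by lia. simpl. lra.
  - simpl. destruct (Nat.eq_dec i (S n)) as [->|Hne].
    + assert (0 <= sum_f_R0 f n) by (apply cond_pos_sum; auto). lra.
    + assert (f i <= sum_f_R0 f n) by (apply IHn; lia). specialize (Hf (S n)). lra.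
Qed.

Lemma lim0_bounded (u : nat -> R) : is_lim_seq u 0 -> exists M, forall n, Rabs (u n) <= M.
Proof.
  intros H. apply is_lim_seq_spec in H.
  destruct (H (mkposreal 1 Rlt_0_1)) as [N HN].
  exists (1 + sum_f_R0 (fun k => Rabs (u k)) N). intros n.
  assert (0 <= sum_f_R0 (fun k => Rabs (u k)) N) by (apply cond_pos_sum; intros; apply Rabs_pos).
  destruct (Compare_dec.le_lt_dec N n) as [h|h].
  - specialize (HN n h). simpl in HN. rewrite Rminus_0_r in HN. lra.
  - assert (Rabs (u n) <= sum_f_R0 (fun k => Rabs (u k)) N).
    { apply (sum_f_ge (fun k => Rabs (u k))). intros; apply Rabs_pos. lia. }
    lra.
Qed.

Lemma ex_pseries_radius (a : nat -> R) x : ex_pseries a x -> Rbar_le (Rabs x) (CV_radius a).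
Proof.
  intros H.
  assert (Hl : is_lim_seq (fun n => a n * x ^ n) 0).
  { apply ex_series_lim_0. destruct H as [l Hl]. exists l.
    eapply is_series_ext; [|exact Hl]. intros n. unfold scal; simpl; unfold mult; simpl. rewrite Rmult_comm. f_equal. }
  destruct (lim0_bounded _ Hl) as [M HM].
  destruct (CV_radius_bounded a) as [Hub _].
  apply Hub. exists M. intros n. rewrite RPow_abs, Rabs_mult, Rabs_Rabsolu, <- Rabs_mult. apply HM.
Qed.

Lemma radius_of_disk (a : nat -> R) r :
  (forall x, Rabs x < r -> ex_pseries a x) -> forall x, Rabs x < r -> Rbar_lt (Rabs x) (CV_radius a).
Proof.
  intros H x Hx.
  set (y := (Rabs x + r) / 2).
  assert (Hy : Rabs y < r).
  { unfold y. assert (0 <= Rabs x) by apply Rabs_pos. rewrite (Rabs_pos_eq ((Rabs x + r)/2)); lra. }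
  generalize (ex_pseries_radius a y (H y Hy)).
  apply Rbar_lt_le_trans. simpl. unfold y.
  assert (0 <= Rabs x) by apply Rabs_pos. rewrite (Rabs_pos_eq ((Rabs x + r)/2)); lra.
Qed.

Lemma disk_radius (a : nat -> R) :
  (forall r, ex_series (fun n => Rabs (a n * r ^ n))) -> forall x, Rbar_lt (Rabs x) (CV_radius a).
Proof.
  intros H x. apply (radius_of_disk a (Rabs x + 1)); [|lra].
  intros y _. apply CV_disk_correct. apply H.
Qed.

Lemma ratio_series (u : nat -> R) N :
  (forall n, 0 <= u n) -> (forall n, (N <= n)%nat -> u (S n) <= u n / 2) -> ex_series u.
Proof.
  intros Hp Hr.
  apply (ex_series_incr_n u N).
  apply (@ex_series_le R_AbsRing R_CompleteNormedModule _ (fun k => u N * (/2) ^ k)).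
  - intros k. change (norm (u (N+k)%nat)) with (Rabs (u (N+k)%nat)). rewrite Rabs_pos_eq by apply Hp.
    induction k.
    + rewrite Nat.add_0_r. simpl. lra.
    + replace (N + S k)%nat with (S (N + k)) by lia.
      specialize (Hr (N + k)%nat ltac:(lia)). simpl. lra.
  - apply (@ex_series_scal_l R_AbsRing R_NormedModule (u N) (fun k => (/2)^k)).
    apply ex_series_geom. rewrite Rabs_pos_eq; lra.
Qed.

Fixpoint pr (k : R) (n : nat) : R :=
  match n with O => 1 | S m => pr k m * (k + 1 + INR m) end.

Lemma pr_pos k n : -1 < k -> 0 < pr k n.
Proof.
  intros hk. induction n; simpl. lra.
  apply Rmult_lt_0_compat; auto. generalize (pos_INR n). lra.
Qed.

Lemma poch_RtoC k n : poch (RtoC (k + 1)) n = RtoC (pr k n).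
Proof.
  induction n; simpl. reflexivity. rewrite IHn. rewrite RtoC_mult. f_equal.
  now rewrite <- RtoC_plus.
Qed.

Lemma poch1 n : poch 1%C n = RtoC (INR (fact n)).
Proof.
  induction n. reflexivity. simpl poch. rewrite IHn.
  rewrite fact_simpl, mult_INR, S_INR, RtoC_mult, RtoC_plus. ring.
Qed.

Lemma Cpow_mult (a b : C) n : Cpow (a * b) n = (Cpow a n * Cpow b n)%C.
Proof. induction n; simpl. ring. rewrite IHn. ring. Qed.

Lemma Cpow_RtoC x n : Cpow (RtoC x) n = RtoC (x ^ n).
Proof. induction n; simpl. reflexivity. rewrite IHn. now rewrite RtoC_mult. Qed.

Definition kc (k : R) (mu : C) (n : nat) : C := (Cpow mu n / RtoC (pr k n))%C.

Lemma RtoC_neq0 x : x <> 0 -> RtoC x <> 0%C.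
Proof. intros H E. apply H. injection E. auto. Qed.

Lemma fact_neq0 n : INR (fact n) <> 0.
Proof. apply not_0_INR. apply fact_neq_0. Qed.

Lemma kummer_eq k mu x n : -1 < k ->
  kummer_term 1%C (RtoC (k + 1)) (mu * RtoC x)%C n = (kc k mu n * RtoC (x ^ n))%C.
Proof.
  intros hk. unfold kummer_term, kc. rewrite poch_RtoC, poch1, Cpow_mult, Cpow_RtoC.
  assert (H1 := RtoC_neq0 _ (fact_neq0 n)).
  assert (H2 := RtoC_neq0 _ (Rgt_not_eq _ _ (pr_pos k n hk))).
  field. split; auto.
Qed.

Lemma kc_rec k mu n : -1 < k ->
  (kc k mu (S n) * RtoC (k + 1 + INR n) = kc k mu n * mu)%C.
Proof.
  intros hk. unfold kc. simpl.
  assert (H2 := RtoC_neq0 _ (Rgt_not_eq _ _ (pr_pos k n hk))).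
  assert (H3 : RtoC (k + 1 + INR n) <> 0%C).
  { apply RtoC_neq0. generalize (pos_INR n). lra. }
  rewrite RtoC_mult. field. split; auto.
Qed.

Lemma kc0 k mu : kc k mu 0 = 1%C.
Proof. unfold kc. simpl. field. Qed.

Lemma Cmod_Cpow (a : C) n : Cmod (Cpow a n) = Cmod a ^ n.
Proof. induction n; simpl. apply Cmod_1. rewrite Cmod_mult, IHn. reflexivity. Qed.

Lemma kc_mod k mu n : -1 < k -> Cmod (kc k mu n) = Cmod mu ^ n / pr k n.
Proof.
  intros hk. unfold kc, Cdiv. rewrite Cmod_mult, Cmod_Cpow.
  rewrite Cmod_inv by (apply RtoC_neq0; apply Rgt_not_eq, pr_pos; auto).
  rewrite Cmod_R, Rabs_pos_eq. reflexivity. apply Rlt_le, pr_pos; auto.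
Qed.

Lemma kc_disk k mu (r : R) : -1 < k -> ex_series (fun n => Cmod (kc k mu n) * Rabs r ^ n).
Proof.
  intros hk.
  set (A := Cmod mu * Rabs r).
  assert (HA : 0 <= A) by (apply Rmult_le_pos; [apply Cmod_ge_0|apply Rabs_pos]).
  destruct (INR_unbounded (2 * A)) as [N HN].
  apply (ratio_series _ N).
  - intros n. apply Rmult_le_pos. apply Cmod_ge_0. apply pow_le, Rabs_pos.
  - intros n Hn. rewrite !kc_mod by auto. simpl.
    assert (Hp := pr_pos k n hk).
    assert (HnN : INR N <= INR n) by (apply le_INR; auto).
    assert (Hd : 0 < k + 1 + INR n) by (generalize (pos_INR n); lra).
    assert (E : Cmod mu * Cmod mu ^ n / (pr k n * (k + 1 + INR n)) * (Rabs r * Rabs r ^ n)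
              = (Cmod mu ^ n / pr k n * Rabs r ^ n) * (A / (k + 1 + INR n))).
    { unfold A. field. split; lra. }
    rewrite E.
    assert (0 <= Cmod mu ^ n / pr k n * Rabs r ^ n).
    { apply Rmult_le_pos. apply Rmult_le_pos. apply pow_le, Cmod_ge_0.
      apply Rlt_le, Rinv_0_lt_compat; auto. apply pow_le, Rabs_pos. }
    assert (A / (k + 1 + INR n) <= / 2).
    { apply (Rmult_le_reg_r (k + 1 + INR n)); auto. unfold Rdiv.
      rewrite Rmult_assoc, Rinv_l by lra. lra. }
    assert (E2 : Cmod mu ^ n / pr k n * Rabs r ^ n / 2 = (Cmod mu ^ n / pr k n * Rabs r ^ n) * / 2) by (unfold Rdiv; ring).
    rewrite E2. apply Rmult_le_compat_l; auto.
Qed.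

Definition cr k mu n := fst (kc k mu n).
Definition ci k mu n := snd (kc k mu n).

Lemma cr_disk k mu r : -1 < k -> ex_series (fun n => Rabs (cr k mu n * r ^ n)).
Proof.
  intros hk.
  apply (@ex_series_le R_AbsRing R_CompleteNormedModule _ _ ) with (2 := kc_disk k mu r hk).
  intros n. change (norm (Rabs (cr k mu n * r ^ n))) with (Rabs (Rabs (cr k mu n * r ^ n))).
  rewrite Rabs_Rabsolu, Rabs_mult, <- RPow_abs. apply Rmult_le_compat_r. apply pow_le, Rabs_pos.
  generalize (Rmax_Cmod (kc k mu n)). unfold cr. generalize (Rmax_l (Rabs (fst (kc k mu n))) (Rabs (snd (kc k mu n)))). lra.
Qed.

Lemma ci_disk k mu r : -1 < k -> ex_series (fun n => Rabs (ci k mu n * r ^ n)).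
Proof.
  intros hk.
  apply (@ex_series_le R_AbsRing R_CompleteNormedModule _ _ ) with (2 := kc_disk k mu r hk).
  intros n. change (norm (Rabs (ci k mu n * r ^ n))) with (Rabs (Rabs (ci k mu n * r ^ n))).
  rewrite Rabs_Rabsolu, Rabs_mult, <- RPow_abs. apply Rmult_le_compat_r. apply pow_le, Rabs_pos.
  generalize (Rmax_Cmod (kc k mu n)). unfold ci. generalize (Rmax_r (Rabs (fst (kc k mu n))) (Rabs (snd (kc k mu n)))). lra.
Qed.

Lemma PS_lin (a b : nat -> R) (al be x : R) : ex_pseries a x -> ex_pseries b x ->
  al * PSeries a x + be * PSeries b x = PSeries (fun n => al * a n + be * b n) x.
Proof.
  intros Ha Hb. rewrite <- !PSeries_scal, <- PSeries_plus.
  - apply PSeries_ext. intros n. reflexivity.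
  - apply (@ex_pseries_scal R_AbsRing R_NormedModule). apply Rmult_comm. exact Ha.
  - apply (@ex_pseries_scal R_AbsRing R_NormedModule). apply Rmult_comm. exact Hb.
Qed.

Lemma locally_disk r x : Rabs x < r -> locally x (fun t => Rabs t < r).
Proof.
  intros H. assert (He : 0 < r - Rabs x) by lra.
  exists (mkposreal _ He). intros t Ht. simpl in Ht.
  unfold ball in Ht; simpl in Ht; unfold AbsRing_ball, abs, minus, plus, opp in Ht; simpl in Ht.
  replace (t + - x) with (t - x) in Ht by ring. generalize (Rabs_triang_inv t x). lra.
Qed.

Lemma Cdiv_RtoC_fst (z : C) x : x <> 0 -> fst (z / RtoC x)%C = fst z / x.
Proof. intros H. destruct z as [u v]. unfold Cdiv, Cinv, Cmult; simpl. field. auto. Qed.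
Lemma Cdiv_RtoC_snd (z : C) x : x <> 0 -> snd (z / RtoC x)%C = snd z / x.
Proof. intros H. destruct z as [u v]. unfold Cdiv, Cinv, Cmult; simpl. field. auto. Qed.

Lemma comp_local (a : nat -> R) (F : R -> R) r k x :
  (forall t, Rabs t < r -> F t = PSeries a t) ->
  (forall t, Rabs t < r -> Rbar_lt (Rabs t) (CV_radius a)) ->
  Rabs x < r ->
  Derive F x + k * (if Req_EM_T x 0 then Derive F 0 else (F x - F 0) / x)
  = PSeries (fun n => (INR (S n) + k) * a (S n)) x.
Proof.
  intros HF Hr Hx.
  assert (Hr0 : 0 < r) by (generalize (Rabs_pos x); lra).
  assert (HD : forall y, Rabs y < r -> Derive F y = PSeries (PS_derive a) y).
  { intros y Hy. rewrite <- Derive_PSeries by auto. apply Derive_ext_loc.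
    generalize (locally_disk r y Hy). apply filter_imp. intros t Ht. now apply HF. }
  assert (Ex1 : ex_pseries (PS_derive a) x).
  { apply CV_radius_inside. rewrite CV_radius_derive. auto. }
  assert (Ex2 : ex_pseries (PS_decr_1 a) x).
  { apply CV_radius_inside. rewrite CV_radius_decr_1. auto. }
  assert (Hq : (if Req_EM_T x 0 then Derive F 0 else (F x - F 0) / x) = PSeries (PS_decr_1 a) x).
  { destruct (Req_EM_T x 0) as [->|Hne].
    - rewrite HD by (rewrite Rabs_R0; lra). rewrite !PSeries_0. unfold PS_derive, PS_decr_1. simpl. ring.
    - rewrite !HF by (auto; rewrite Rabs_R0; lra). rewrite PSeries_0.
      rewrite (PSeries_decr_1 a x) by (apply CV_radius_inside; auto). field. auto. }
  rewrite Hq, HD by auto.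
  replace (PSeries (PS_derive a) x) with (1 * PSeries (PS_derive a) x) by ring.
  rewrite PS_lin by auto. apply PSeries_ext. intros n. unfold PS_derive, PS_decr_1. ring.
Qed.

Lemma T_local (f : R -> C) (a b : nat -> R) r k x :
  (forall t, Rabs t < r -> f t = (PSeries a t, PSeries b t)) ->
  (forall t, Rabs t < r -> Rbar_lt (Rabs t) (CV_radius a)) ->
  (forall t, Rabs t < r -> Rbar_lt (Rabs t) (CV_radius b)) ->
  Rabs x < r ->
  T_kappa k f x = (PSeries (fun n => (INR (S n) + k) * a (S n)) x,
                   PSeries (fun n => (INR (S n) + k) * b (S n)) x).
Proof.
  intros Hf Ha Hb Hx.
  assert (H1 := comp_local a (fun t => fst (f t)) r k x
     (fun t Ht => f_equal fst (Hf t Ht)) Ha Hx).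
  assert (H2 := comp_local b (fun t => snd (f t)) r k x
     (fun t Ht => f_equal snd (Hf t Ht)) Hb Hx).
  cbv beta in H1, H2.
  unfold T_kappa, diff_quot, Cderiv, Re, Im.
  destruct (Req_EM_T x 0) as [E|E].
  - rewrite <- H1, <- H2. apply injective_projections; simpl; ring.
  - rewrite <- H1, <- H2. apply injective_projections; simpl.
    + field. auto.
    + field. auto.
Qed.

Lemma binom_bound n m h R : 0 <= h -> 0 <= R ->
  h ^ m / INR (fact m) * (INR (fact (m + n)) / INR (fact n)) * R ^ n <= (R + h) ^ (m + n).
Proof.
  intros Hh HR. rewrite Rplus_comm, binomial.
  eapply Rle_trans; [|apply (sum_f_ge _ (m + n) m)].
  - unfold Binomial.C. replace (m + n - m)%nat with n by lia.
    right. field. split; apply fact_neq0.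
  - intros i. apply Rmult_le_pos. apply Rmult_le_pos.
    unfold Binomial.C. apply Rmult_le_pos. apply pos_INR. apply Rlt_le, Rinv_0_lt_compat.
    apply Rmult_lt_0_compat; apply lt_0_INR, lt_O_fact.
    apply pow_le; auto. apply pow_le; auto.
  - lia.
Qed.

Section Taylor.
Variable a : nat -> R.
Hypothesis Hinf : forall r, ex_series (fun n => Rabs (a n * r ^ n)).

Lemma rad_inf x : Rbar_lt (Rabs x) (CV_radius a).
Proof. apply disk_radius. exact Hinf. Qed.

Lemma pseries_bound (b : nat -> R) z R : Rabs z <= R -> ex_series (fun n => Rabs (b n) * R ^ n) ->
  Rabs (PSeries b z) <= Series (fun n => Rabs (b n) * R ^ n).
Proof.
  intros Hz Hex.
  assert (Hz0 : 0 <= R) by (generalize (Rabs_pos z); lra).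
  assert (Hle : forall n, 0 <= Rabs (b n * z ^ n) <= Rabs (b n) * R ^ n).
  { intros n. split. apply Rabs_pos. rewrite Rabs_mult, <- RPow_abs.
    apply Rmult_le_compat_l. apply Rabs_pos. apply pow_incr. split; auto. apply Rabs_pos. }
  unfold PSeries. eapply Rle_trans. apply Series_Rabs.
  - apply (@ex_series_le R_AbsRing R_CompleteNormedModule _ _) with (2 := Hex).
    intros n. change (norm (Rabs (b n * z ^ n))) with (Rabs (Rabs (b n * z ^ n))).
    rewrite Rabs_Rabsolu. apply Hle.
  - apply Series_le; auto.
Qed.

End Taylor.

Section Taylor2.
Variable a : nat -> R.
Hypothesis Hinf : forall r, ex_series (fun n => Rabs (a n * r ^ n)).

Definition wt (R' : R) j := Rabs (a j) * R' ^ j.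

Lemma wt_ex R' : 0 <= R' -> ex_series (wt R').
Proof.
  intros H. eapply ex_series_ext; [|apply (Hinf R')]. intros n. unfold wt.
  rewrite Rabs_mult, (Rabs_pos_eq (R' ^ n)); auto. apply pow_le; auto.
Qed.

Lemma deriv_bound m z h R' : 0 <= h -> Rabs z <= R' ->
  Rabs (h ^ m / INR (fact m) * Derive_n (PSeries a) m z) <= Series (fun n => wt (R' + h) (m + n)).
Proof.
  intros Hh Hz.
  assert (HR : 0 <= R') by (generalize (Rabs_pos z); lra).
  assert (Hc : 0 <= h ^ m / INR (fact m)).
  { apply Rmult_le_pos. apply pow_le; auto. apply Rlt_le, Rinv_0_lt_compat, lt_0_INR, lt_O_fact. }
  rewrite Derive_n_PSeries by (apply rad_inf; auto).
  assert (Hex : ex_series (fun n => Rabs (PS_derive_n m a n) * R' ^ n)).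
  { eapply ex_series_ext; [|apply (CV_disk_inside (PS_derive_n m a) R')].
    - intros n. cbv beta. rewrite Rabs_mult, (Rabs_pos_eq (R' ^ n)); auto. apply pow_le; auto.
    - rewrite CV_radius_derive_n. apply rad_inf; auto. }
  rewrite Rabs_mult, (Rabs_pos_eq _ Hc).
  eapply Rle_trans. apply Rmult_le_compat_l; auto. apply pseries_bound; eauto.
  rewrite <- Series_scal_l. apply Series_le.
  - intros n. split.
    + apply Rmult_le_pos; auto. apply Rmult_le_pos. apply Rabs_pos. apply pow_le; auto.
    + unfold PS_derive_n, wt. rewrite Rabs_mult.
      rewrite (Rabs_pos_eq (INR (fact (n + m)) / INR (fact n))).
      2:{ apply Rmult_le_pos. apply pos_INR. apply Rlt_le, Rinv_0_lt_compat, lt_0_INR, lt_O_fact. }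
      replace (n + m)%nat with (m + n)%nat by lia.
      assert (Hb := binom_bound n m h R' Hh HR).
      assert (0 <= Rabs (a (m + n)%nat)) by apply Rabs_pos.
      replace (h ^ m / INR (fact m) * (INR (fact (m + n)) / INR (fact n) * Rabs (a (m + n)%nat) * R' ^ n))
        with (Rabs (a (m + n)%nat) * (h ^ m / INR (fact m) * (INR (fact (m + n)) / INR (fact n)) * R' ^ n)) by ring.
      apply Rmult_le_compat_l; auto.
  - apply (ex_series_incr_n (wt (R' + h)) m). apply wt_ex. lra.
Qed.

Lemma tail_lim (w : nat -> R) : ex_series w -> is_lim_seq (fun m => Series (fun n => w (S m + n)%nat)) 0.
Proof.
  intros Hw.
  assert (E : forall m, Series (fun n => w (S m + n)%nat) = Series w - sum_f_R0 w m).
  { intros m. rewrite (Series_incr_n w (S m)) by (lia || auto). simpl. ring. }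
  eapply is_lim_seq_ext. intros m. symmetry. apply E.
  replace (Finite 0) with (Finite (Series w - Series w)) by (f_equal; ring).
  apply is_lim_seq_minus'. apply is_lim_seq_const.
  assert (H := Series_correct w Hw).
  eapply is_lim_seq_ext; [|exact H]. intros n. apply sum_n_Reals.
Qed.

Lemma taylor_pos x0 h : 0 < h ->
  is_series (fun m => h ^ m / INR (fact m) * Derive_n (PSeries a) m x0) (PSeries a (x0 + h)).
Proof.
  intros Hh.
  set (R' := Rabs x0 + h).
  set (T := fun m => Series (fun n => wt (R' + h) (S m + n)%nat)).
  set (L := PSeries a (x0 + h)).
  assert (HT : is_lim_seq T 0) by (apply tail_lim, wt_ex; unfold R'; generalize (Rabs_pos x0); lra).
  assert (Hb : forall n, Rabs (L - sum_f_R0 (fun m => h ^ m / INR (fact m) * Derive_n (PSeries a) m x0) n) <= T n).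
  { intros n.
    assert (TL := Taylor_Lagrange (PSeries a) n x0 (x0 + h) ltac:(lra)
       ltac:(intros t _ k _; apply ex_derive_n_PSeries, rad_inf; auto)).
    destruct TL as [z [Hz E]].
    replace (x0 + h - x0) with h in E by ring. unfold L. rewrite E.
    match goal with |- Rabs (?A + ?B - ?A) <= _ => replace (A + B - A) with B by ring end.
    apply deriv_bound. lra. unfold R'.
    assert (Rabs z <= Rabs x0 + Rabs h) by (replace z with (x0 + (z - x0)) by ring; eapply Rle_trans; [apply Rabs_triang|];
      apply Rplus_le_compat_l; rewrite !Rabs_pos_eq; lra).
    rewrite (Rabs_pos_eq h) in H; lra. }
  unfold is_series. change (is_lim_seq (sum_n (fun m => h ^ m / INR (fact m) * Derive_n (PSeries a) m x0)) L).
  apply is_lim_seq_le_le with (u := fun n => L - T n) (w := fun n => L + T n).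
  - intros n. rewrite sum_n_Reals. specialize (Hb n). apply Rabs_le_between' in Hb. lra.
  - replace (Finite L) with (Finite (L - 0)) by (f_equal; ring).
    apply is_lim_seq_minus'. apply is_lim_seq_const. exact HT.
  - replace (Finite L) with (Finite (L + 0)) by (f_equal; ring).
    apply is_lim_seq_plus'. apply is_lim_seq_const. exact HT.
Qed.

End Taylor2.

Lemma taylor_zero (a : nat -> R) x0 :
  is_series (fun m => 0 ^ m / INR (fact m) * Derive_n (PSeries a) m x0) (PSeries a (x0 + 0)).
Proof.
  rewrite Rplus_0_r.
  assert (E : forall n, sum_n (fun m => 0 ^ m / INR (fact m) * Derive_n (PSeries a) m x0) n = PSeries a x0).
  { induction n.
    - rewrite sum_O. simpl. field.
    - rewrite sum_Sn, IHn. simpl. unfold plus; simpl. unfold Rdiv. ring. }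
  unfold is_series. change (is_lim_seq (sum_n (fun m => 0 ^ m / INR (fact m) * Derive_n (PSeries a) m x0)) (PSeries a x0)).
  eapply is_lim_seq_ext. intros n. symmetry. apply E. apply is_lim_seq_const.
Qed.

Lemma taylor_all (a : nat -> R) (Hinf : forall r, ex_series (fun n => Rabs (a n * r ^ n))) x0 h :
  is_series (fun m => h ^ m / INR (fact m) * Derive_n (PSeries a) m x0) (PSeries a (x0 + h)).
Proof.
  destruct (Rtotal_order h 0) as [Hn|[->|Hp]].
  2: apply taylor_zero.
  2: apply taylor_pos; auto.
  set (a' := fun n => (-1) ^ n * a n).
  assert (Hinf' : forall r, ex_series (fun n => Rabs (a' n * r ^ n))).
  { intros r. eapply ex_series_ext; [|apply (Hinf r)]. intros n. unfold a'.
    cbv beta. rewrite !Rabs_mult, pow_1_abs, Rmult_1_l. reflexivity. }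
  assert (HP : forall t, PSeries a' t = PSeries a (- t)).
  { intros t. unfold PSeries. apply Series_ext. intros n. unfold a'.
    replace (- t) with (-1 * t) by ring. rewrite Rpow_mult_distr. ring. }
  assert (HD : forall m, Derive_n (PSeries a') m (- x0) = (-1) ^ m * Derive_n (PSeries a) m x0).
  { intros m. rewrite (Derive_n_ext _ (fun t => PSeries a (- t))) by apply HP.
    apply is_derive_n_unique. apply is_derive_n_comp_opp.
    - apply filter_forall. intros y k _. apply ex_derive_n_PSeries, rad_inf; auto.
    - rewrite Ropp_involutive. apply Derive_n_correct. apply ex_derive_n_PSeries, rad_inf; auto. }
  assert (H := taylor_pos a' Hinf' (- x0) (- h) ltac:(lra)).
  rewrite HP in H. replace (- (- x0 + - h)) with (x0 + h) in H by ring.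
  eapply is_series_ext; [|exact H]. intros m. simpl. rewrite HD.
  replace ((- h) ^ m / INR (fact m) * ((-1) ^ m * Derive_n (PSeries a) m x0))
    with ((- h * -1) ^ m / INR (fact m) * Derive_n (PSeries a) m x0)
    by (rewrite Rpow_mult_distr; field; apply fact_neq0).
  f_equal. f_equal. f_equal. ring.
Qed.

Lemma pair_analytic (a b : nat -> R)
  (Ha : forall r, ex_series (fun n => Rabs (a n * r ^ n)))
  (Hb : forall r, ex_series (fun n => Rabs (b n * r ^ n))) :
  real_analytic (fun x => (PSeries a x, PSeries b x)).
Proof.
  intros x0. exists 1. split. lra.
  exists (fun m => (Derive_n (PSeries a) m x0 / INR (fact m), Derive_n (PSeries b) m x0 / INR (fact m))).
  intros x _. apply C_series_iff. simpl. split.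
  - assert (H := taylor_all a Ha x0 (x - x0)). replace (x0 + (x - x0)) with x in H by ring.
    eapply is_series_ext; [|exact H]. intros m. simpl. field. apply fact_neq0.
  - assert (H := taylor_all b Hb x0 (x - x0)). replace (x0 + (x - x0)) with x in H by ring.
    eapply is_series_ext; [|exact H]. intros m. simpl. field. apply fact_neq0.
Qed.

Lemma is_pseries_R (a : nat -> R) x l : is_pseries a x l <-> is_series (fun n => a n * x ^ n) l.
Proof.
  split; intros H; eapply is_series_ext; try exact H; intros n; simpl;
  unfold scal; simpl; unfold mult; simpl; rewrite Rmult_comm; reflexivity.
Qed.

Lemma ex_lin (a b : nat -> R) al be x : ex_pseries a x -> ex_pseries b x ->
  ex_pseries (fun n => al * a n + be * b n) x.
Proof.
  intros Ha Hb.
  assert (H := @ex_pseries_plus R_AbsRing R_NormedModule _ _ x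
    (@ex_pseries_scal R_AbsRing R_NormedModule al a x (Rmult_comm _ _) Ha)
    (@ex_pseries_scal R_AbsRing R_NormedModule be b x (Rmult_comm _ _) Hb)).
  destruct H as [l Hl]. exists l. eapply is_series_ext; [|exact Hl]. intros n. reflexivity.
Qed.

Section G.
Variable k : R.
Variable mu : C.
Hypothesis hk : -1 < k.

Definition gK (x : R) : C := (PSeries (cr k mu) x, PSeries (ci k mu) x).

Lemma cr_rad x : Rbar_lt (Rabs x) (CV_radius (cr k mu)).
Proof. apply disk_radius. intros r. apply cr_disk; auto. Qed.
Lemma ci_rad x : Rbar_lt (Rabs x) (CV_radius (ci k mu)).
Proof. apply disk_radius. intros r. apply ci_disk; auto. Qed.

Lemma gK_series x : is_series (kummer_term 1%C (RtoC (k + 1)) (mu * RtoC x)%C) (gK x).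
Proof.
  apply C_series_iff. unfold gK. cbn [fst snd]. split.
  - assert (H := PSeries_correct _ _ (CV_radius_inside _ x (cr_rad x))).
    apply is_pseries_R in H. eapply is_series_ext; [|exact H]. intros n. cbv beta.
    rewrite kummer_eq by auto. unfold cr. simpl. ring.
  - assert (H := PSeries_correct _ _ (CV_radius_inside _ x (ci_rad x))).
    apply is_pseries_R in H. eapply is_series_ext; [|exact H]. intros n. cbv beta.
    rewrite kummer_eq by auto. unfold ci. simpl. ring.
Qed.

Lemma gK0 : gK 0 = 1%C.
Proof. unfold gK. rewrite !PSeries_0. unfold cr, ci. rewrite kc0. reflexivity. Qed.

Lemma fst_mulR (z : C) t : fst (z * RtoC t)%C = fst z * t.
Proof. destruct z; simpl; ring. Qed.
Lemma snd_mulR (z : C) t : snd (z * RtoC t)%C = snd z * t.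
Proof. destruct z; simpl; ring. Qed.
Lemma fst_mul (z w : C) : fst (z * w)%C = fst z * fst w - snd z * snd w.
Proof. destruct z, w; simpl; ring. Qed.
Lemma snd_mul (z w : C) : snd (z * w)%C = fst z * snd w + snd z * fst w.
Proof. destruct z, w; simpl; ring. Qed.

Lemma cr_rec n : (INR (S n) + k) * cr k mu (S n) = fst mu * cr k mu n + - snd mu * ci k mu n.
Proof.
  assert (H := f_equal fst (kc_rec k mu n hk)). rewrite fst_mulR, fst_mul in H. unfold cr, ci.
  rewrite S_INR. lra.
Qed.
Lemma ci_rec n : (INR (S n) + k) * ci k mu (S n) = fst mu * ci k mu n + snd mu * cr k mu n.
Proof.
  assert (H := f_equal snd (kc_rec k mu n hk)). rewrite snd_mulR, snd_mul in H. unfold cr, ci.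
  rewrite S_INR. lra.
Qed.

Lemma gK_ode x : T_kappa k gK x = (mu * gK x)%C.
Proof.
  rewrite (T_local gK (cr k mu) (ci k mu) (Rabs x + 1) k x); auto.
  2: intros; apply cr_rad. 2: intros; apply ci_rad. 2: lra.
  unfold gK. apply injective_projections.
  - rewrite fst_mul. cbn [fst snd].
    replace (fst mu * PSeries (cr k mu) x - snd mu * PSeries (ci k mu) x)
      with (fst mu * PSeries (cr k mu) x + - snd mu * PSeries (ci k mu) x) by ring.
    rewrite PS_lin by (apply CV_radius_inside; (apply cr_rad || apply ci_rad)).
    apply PSeries_ext. intros n. rewrite cr_rec. reflexivity.
  - rewrite snd_mul. cbn [fst snd].
    replace (fst mu * PSeries (ci k mu) x + snd mu * PSeries (cr k mu) x)
      with (fst mu * PSeries (ci k mu) x + snd mu * PSeries (cr k mu) x) by ring.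
    rewrite PS_lin by (apply CV_radius_inside; (apply cr_rad || apply ci_rad)).
    apply PSeries_ext. intros n. rewrite ci_rec. reflexivity.
Qed.

Lemma gK_analytic : real_analytic gK.
Proof. apply pair_analytic; intros r; [apply cr_disk|apply ci_disk]; auto. Qed.

End G.
Lemma psi_zero (u v : R -> R) k p q a b :
  (forall t, t <> 0 -> ex_derive u t /\ ex_derive v t /\
     Derive u t = p * u t - q * v t - k * u t / t /\
     Derive v t = p * v t + q * u t - k * v t / t) ->
  0 < a * b -> u a = 0 -> v a = 0 -> u b = 0 /\ v b = 0.
Proof.
  intros Hd Hab Ha Hb.
  set (psi := fun t => (u t ^ 2 + v t ^ 2) * exp (k * ln (t * t) - 2 * p * t)).
  assert (Hpsi : forall t, t <> 0 -> is_derive psi t 0).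
  { intros t Ht. destruct (Hd t Ht) as [Du [Dv [Eu Ev]]].
    assert (Htt : 0 < t * t) by (apply Rsqr_pos_lt in Ht; unfold Rsqr in Ht; exact Ht).
    unfold psi. auto_derive.
    - repeat split; auto.
    - change (Derive (fun x : R => u x) t) with (Derive u t). change (Derive (fun x : R => v x) t) with (Derive v t). rewrite Eu, Ev. field. auto. }
  assert (Hnz : forall t, Rmin a b <= t <= Rmax a b -> t <> 0).
  { intros t [H1 H2] ->. unfold Rmin, Rmax in *.
    destruct (Rle_dec a b); nra. }
  destruct (MVT_gen psi a b (fun _ => 0)) as [c [_ Hc]].
  - intros x Hx. apply Hpsi, Hnz. lra.
  - intros x Hx. apply continuity_pt_filterlim. apply (ex_derive_continuous psi).
    eexists. apply Hpsi, Hnz; auto.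
  - assert (psi a = 0) by (unfold psi; rewrite Ha, Hb; ring).
    assert (Hpb : psi b = 0) by lra.
    unfold psi in Hpb.
    assert (0 < exp (k * ln (b * b) - 2 * p * b)) by apply exp_pos.
    assert (u b ^ 2 + v b ^ 2 = 0).
    { apply Rmult_integral in Hpb. destruct Hpb; auto. lra. }
    split; nra.
Qed.

Lemma ex_pseries_ext' (a b : nat -> R) x : (forall n, a n = b n) -> ex_pseries a x -> ex_pseries b x.
Proof. intros E [l Hl]. exists l. eapply is_series_ext; [|exact Hl]. intros n. cbv beta. now rewrite E. Qed.

Lemma analytic_loc (f : R -> C) x0 : real_analytic f -> exists r, 0 < r /\ exists ar ai : nat -> R,
  (forall s, Rabs s < r -> f (x0 + s) = (PSeries ar s, PSeries ai s)) /\
  (forall s, Rabs s < r -> Rbar_lt (Rabs s) (CV_radius ar)) /\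
  (forall s, Rabs s < r -> Rbar_lt (Rabs s) (CV_radius ai)).
Proof.
  intros Han. destruct (Han x0) as [r [Hr [A HA]]].
  exists r. split; auto. exists (fun n => fst (A n)), (fun n => snd (A n)).
  assert (HS : forall s, Rabs s < r -> is_pseries (fun n => fst (A n)) s (fst (f (x0 + s))) /\
                                       is_pseries (fun n => snd (A n)) s (snd (f (x0 + s)))).
  { intros s Hs. assert (H := HA (x0 + s) ltac:(replace (x0 + s - x0) with s by ring; auto)).
    apply C_series_iff in H. destruct H as [H1 H2].
    replace (x0 + s - x0) with s in H1, H2 by ring.
    split; apply is_pseries_R; [eapply is_series_ext; [|exact H1]|eapply is_series_ext; [|exact H2]];
      intros n; cbv beta; [rewrite fst_mulR|rewrite snd_mulR]; reflexivity. }
  split; [|split].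
  - intros s Hs. destruct (HS s Hs) as [H1 H2]. apply injective_projections; simpl; symmetry;
    apply is_pseries_unique; auto.
  - apply radius_of_disk. intros s Hs. destruct (HS s Hs) as [H1 _]. eexists; exact H1.
  - apply radius_of_disk. intros s Hs. destruct (HS s Hs) as [_ H2]. eexists; exact H2.
Qed.

Lemma analytic_deriv (f : R -> C) x : real_analytic f ->
  ex_derive (fun t => fst (f t)) x /\ ex_derive (fun t => snd (f t)) x.
Proof.
  intros Han. destruct (analytic_loc f x Han) as [r [Hr [ar [ai [Hf [Ha Hb]]]]]].
  assert (Hloc : locally x (fun t => Rabs (t - x) < r)).
  { assert (H := locally_disk r 0 ltac:(rewrite Rabs_R0; lra)).
    destruct H as [e He]. exists e. intros t Ht. apply He.
    unfold ball in *; simpl in *; unfold AbsRing_ball, abs, minus, plus, opp in *; simpl in *.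
    replace (t - x + - 0) with (t + - x) by ring. exact Ht. }
  assert (H0 : Rabs 0 < r) by (rewrite Rabs_R0; lra).
  split.
  - apply (ex_derive_ext_loc (fun t => PSeries ar (t - x))).
    + generalize Hloc. apply filter_imp. intros t Ht.
      assert (E := Hf _ Ht). rewrite Rplus_minus in E. rewrite E. reflexivity.
    + apply (ex_derive_comp (PSeries ar) (fun t => t - x)).
      * replace (x - x) with 0 by ring. apply ex_derive_PSeries. apply Ha. auto.
      * auto_derive. auto.
  - apply (ex_derive_ext_loc (fun t => PSeries ai (t - x))).
    + generalize Hloc. apply filter_imp. intros t Ht.
      assert (E := Hf _ Ht). rewrite Rplus_minus in E. rewrite E. reflexivity.
    + apply (ex_derive_comp (PSeries ai) (fun t => t - x)).
      * replace (x - x) with 0 by ring. apply ex_derive_PSeries. apply Hb. auto.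
      * auto_derive. auto.
Qed.

Definition solves (k : R) (mu : C) (f : R -> C) : Prop :=
  real_analytic f /\ f 0 = 1%C /\ (forall x, T_kappa k f x = (mu * f x)%C).

Lemma fst_plus (z w : C) : fst (z + w)%C = fst z + fst w. Proof. destruct z, w; reflexivity. Qed.
Lemma snd_plus (z w : C) : snd (z + w)%C = snd z + snd w. Proof. destruct z, w; reflexivity. Qed.
Lemma fst_minus (z w : C) : fst (z - w)%C = fst z - fst w. Proof. destruct z, w; simpl; ring. Qed.
Lemma snd_minus (z w : C) : snd (z - w)%C = snd z - snd w. Proof. destruct z, w; simpl; ring. Qed.
Lemma fst_Rmul (z : C) t : fst (RtoC t * z)%C = t * fst z. Proof. destruct z; simpl; ring. Qed.
Lemma snd_Rmul (z : C) t : snd (RtoC t * z)%C = t * snd z. Proof. destruct z; simpl; ring. Qed.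

Lemma ode_comp k mu f x : solves k mu f -> x <> 0 ->
  Derive (fun t => fst (f t)) x = fst mu * fst (f x) - snd mu * snd (f x) - k * ((fst (f x) - 1) / x) /\
  Derive (fun t => snd (f t)) x = fst mu * snd (f x) + snd mu * fst (f x) - k * (snd (f x) / x).
Proof.
  intros [_ [H0 Hode]] Hx. specialize (Hode x).
  assert (E1 : fst (f 0) = 1) by (rewrite H0; reflexivity).
  assert (E2 : snd (f 0) = 0) by (rewrite H0; reflexivity).
  unfold T_kappa, diff_quot, Cderiv, Re, Im in Hode.
  destruct (Req_EM_T x 0) as [E|_]; [contradiction|].
  split.
  - apply (f_equal fst) in Hode. rewrite fst_plus, fst_Rmul, Cdiv_RtoC_fst, fst_minus, fst_mul, E1 in Hode by auto.
    cbn [fst snd] in Hode. lra.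
  - apply (f_equal snd) in Hode. rewrite snd_plus, snd_Rmul, Cdiv_RtoC_snd, snd_minus, snd_mul, E2 in Hode by auto.
    cbn [fst snd] in Hode. replace (snd (f x) - 0) with (snd (f x)) in Hode by ring. lra.
Qed.

Lemma local_eq k mu (hk : -1 < k) f : solves k mu f ->
  exists r, 0 < r /\ forall t, Rabs t < r -> f t = gK k mu t.
Proof.
  intros Hs. destruct Hs as [Han [H0 Hode]].
  destruct (analytic_loc f 0 Han) as [r [Hr [ar [ai [Hf [Ha Hb]]]]]].
  assert (Hf' : forall t, Rabs t < r -> f t = (PSeries ar t, PSeries ai t)).
  { intros t Ht. rewrite <- (Hf t Ht). now rewrite Rplus_0_l. }
  exists r. split; auto.
  assert (Hr0 : Rabs 0 < r) by (rewrite Rabs_R0; auto).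
  assert (Ea : forall t, Rabs t < r -> ex_pseries ar t) by (intros; apply CV_radius_inside; auto).
  assert (Eb : forall t, Rabs t < r -> ex_pseries ai t) by (intros; apply CV_radius_inside; auto).
  assert (ExA : forall (c : nat -> R) t, Rabs t < r -> (forall t, Rabs t < r -> Rbar_lt (Rabs t) (CV_radius c)) ->
            ex_pseries (fun n => (INR (S n) + k) * c (S n)) t).
  { intros c t Ht Hc. eapply ex_pseries_ext'; [|apply (ex_lin (PS_derive c) (PS_decr_1 c) 1 k)].
    - intros n. unfold PS_derive, PS_decr_1. ring.
    - apply CV_radius_inside. rewrite CV_radius_derive. auto.
    - apply CV_radius_inside. rewrite CV_radius_decr_1. auto. }
  assert (rec : forall n, (INR (S n) + k) * ar (S n) = fst mu * ar n + - snd mu * ai n /\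
                          (INR (S n) + k) * ai (S n) = fst mu * ai n + snd mu * ar n).
  { intros n.
    assert (HT : forall t, Rabs t < r -> T_kappa k f t = _) by (intros t Ht; exact (T_local f ar ai r k t Hf' Ha Hb Ht)).
    assert (R0 : forall c : nat -> R, (forall t, Rabs t < r -> ex_pseries c t) -> Rbar_lt 0 (CV_radius c)).
    { intros c Hc. generalize (radius_of_disk c r Hc 0 Hr0). rewrite Rabs_R0. auto. }
    split; [apply (PSeries_ext_recip (fun n => (INR (S n) + k) * ar (S n)) (fun n => fst mu * ar n + - snd mu * ai n) n)
           |apply (PSeries_ext_recip (fun n => (INR (S n) + k) * ai (S n)) (fun n => fst mu * ai n + snd mu * ar n) n)].
    - apply R0. intros t Ht. apply (ExA ar); auto.
    - apply R0. intros t Ht. apply ex_lin; auto.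
    - generalize (locally_disk r 0 Hr0). apply filter_imp. intros t Ht.
      rewrite <- PS_lin by auto.
      assert (E := f_equal fst (HT t Ht)). rewrite Hode, fst_mul, (Hf' t Ht) in E.
      cbn [fst snd] in E. rewrite <- E. ring.
    - apply R0. intros t Ht. apply (ExA ai); auto.
    - apply R0. intros t Ht. apply ex_lin; auto.
    - generalize (locally_disk r 0 Hr0). apply filter_imp. intros t Ht.
      rewrite <- PS_lin by auto.
      assert (E := f_equal snd (HT t Ht)). rewrite Hode, snd_mul, (Hf' t Ht) in E.
      cbn [fst snd] in E. rewrite <- E. ring. }
  assert (I0 : ar 0%nat = 1 /\ ai 0%nat = 0).
  { assert (E := Hf' 0 Hr0). rewrite H0, !PSeries_0 in E. injection E. intros; split; auto. }
  assert (Hc : forall n, ar n = cr k mu n /\ ai n = ci k mu n).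
  { induction n.
    - unfold cr, ci. rewrite kc0. simpl. exact I0.
    - destruct IHn as [IH1 IH2]. destruct (rec n) as [R1 R2].
      assert (Hnz : INR (S n) + k <> 0) by (rewrite S_INR; generalize (pos_INR n); lra).
      assert (C1 := cr_rec k mu hk n). assert (C2 := ci_rec k mu hk n).
      rewrite IH1, IH2, <- C1 in R1. rewrite IH1, IH2, <- C2 in R2.
      split; eapply Rmult_eq_reg_l; eauto. }
  intros t Ht. rewrite (Hf' t Ht). unfold gK. f_equal; apply PSeries_ext; intros n; apply Hc.
Qed.

Lemma solves_eq_gK k mu (hk : -1 < k) f : solves k mu f -> forall x, f x = gK k mu x.
Proof.
  intros Hs.
  assert (Hg : solves k mu (gK k mu)).
  { split; [apply gK_analytic; auto|split; [apply gK0|intros; apply gK_ode; auto]]. }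
  destruct (local_eq k mu hk f Hs) as [r1 [Hr1 E1]].
  intros x. destruct (Rlt_dec (Rabs x) r1) as [Hx|Hx]; [apply E1; auto|].
  assert (Hx0 : x <> 0) by (intros ->; rewrite Rabs_R0 in Hx; lra).
  set (a := if Rlt_dec 0 x then r1 / 2 else - (r1 / 2)).
  assert (Hax : 0 < a * x /\ Rabs a < r1).
  { unfold a. destruct (Rlt_dec 0 x).
    - split. nra. rewrite Rabs_pos_eq; lra.
    - split. assert (x < 0) by lra. nra. rewrite Rabs_Ropp, Rabs_pos_eq; lra. }
  destruct Hax as [Hax Har].
  set (u := fun t => fst (f t) - fst (gK k mu t)).
  set (v := fun t => snd (f t) - snd (gK k mu t)).
  assert (Hd : forall t, t <> 0 -> ex_derive u t /\ ex_derive v t /\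
     Derive u t = fst mu * u t - snd mu * v t - k * u t / t /\
     Derive v t = fst mu * v t + snd mu * u t - k * v t / t).
  { intros t Ht.
    destruct (analytic_deriv f t (proj1 Hs)) as [Df1 Df2].
    destruct (analytic_deriv (gK k mu) t (proj1 Hg)) as [Dg1 Dg2].
    destruct (ode_comp k mu f t Hs Ht) as [Of1 Of2].
    destruct (ode_comp k mu (gK k mu) t Hg Ht) as [Og1 Og2].
    split; [|split; [|split]].
    - exact (ex_derive_minus (fun t => fst (f t)) (fun t => fst (gK k mu t)) t Df1 Dg1).
    - exact (ex_derive_minus (fun t => snd (f t)) (fun t => snd (gK k mu t)) t Df2 Dg2).
    - unfold u, v. rewrite Derive_minus by auto. rewrite Of1, Og1. field. auto.
    - unfold u, v. rewrite Derive_minus by auto. rewrite Of2, Og2. field. auto. }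
  assert (Ea := E1 a Har).
  destruct (psi_zero u v k (fst mu) (snd mu) a x Hd Hax) as [U V].
  - unfold u. rewrite Ea. ring.
  - unfold v. rewrite Ea. ring.
  - unfold u, v in U, V. apply injective_projections; lra.
Qed.

Theorem theorem5p1 (kappa : R) (lambda : C) (hk : -1 < kappa) :
  (exists g : R -> C, forall x : R,
      is_series (kummer_term 1%C (RtoC (kappa + 1)) (Ci * lambda * RtoC x)%C) (g x)) /\
  (forall f : R -> C,
      (real_analytic f /\ f 0 = 1%C /\
       (forall x : R, T_kappa kappa f x = (Ci * lambda * f x)%C))
      <->
      (forall x : R,
         is_series (kummer_term 1%C (RtoC (kappa + 1)) (Ci * lambda * RtoC x)%C) (f x))).
Proof.
  split.
  - exists (gK kappa (Ci * lambda)). intros x. apply gK_series; auto.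
  - intros f. split.
    + intros Hs x. rewrite (solves_eq_gK kappa (Ci * lambda) hk f Hs x). apply gK_series; auto.
    + intros Hser.
      assert (E : f = gK kappa (Ci * lambda)).
      { apply functional_extensionality. intros x.
        assert (H1 := Hser x). assert (H2 := gK_series kappa (Ci * lambda) hk x).
        apply C_series_iff in H1, H2. destruct H1 as [A1 B1]. destruct H2 as [A2 B2].
        apply injective_projections.
        - rewrite <- (is_series_unique _ _ A1). apply is_series_unique. exact A2.
        - rewrite <- (is_series_unique _ _ B1). apply is_series_unique. exact B2. }
      rewrite E. split; [apply gK_analytic; auto|split; [apply gK0|intros; apply gK_ode; auto]].
Qed.
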